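(* Let $G$ be a connected $4$-regular graph and let $H$ be a proper subgraph of $G$ whose number of vertices is not divisible by $3$. Then $H$ contains a vertex of degree at most $3$ in $H$ which does not lie in a connected component of $H$ consisting of a single triangle. *)

(* Defs.v *)
From mathcomp Require Import all_boot.
Set Implicit Arguments. Unset Strict Implicit. Unset Printing Implicit Defensive.

Section Graphs.
Variable T : finType.

Definition simple_graph (e : rel T) : Prop := symmetric e /\ irreflexive e.

Definition deg (e : rel T) (x : T) : nat := #|[set y | e x y]|.

Definition regular (e : rel T) (k : nat) : Prop := forall x, deg e x = k.

Definition connected_graph (e : rel T) : Prop := forall x y, connect e x y.

Definition subgraph (e : rel T) (V : {set T}) (F : rel T) : Prop :=
  symmetric F /\ forall x y, F x y -> [&& e x y, x \in V & y \in V].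

Definition proper_subgraph (e : rel T) (V : {set T}) (F : rel T) : Prop :=
  subgraph e V F /\ (V != [set: T] \/ exists x y, e x y && ~~ F x y).

Definition hdeg (V : {set T}) (F : rel T) (x : T) : nat := #|[set y in V | F x y]|.

Definition hcomp (F : rel T) (x : T) : {set T} := [set y | connect F x y].

Definition triangle_component (F : rel T) (x : T) : Prop :=
  #|hcomp F x| = 3 /\
  forall a b, a \in hcomp F x -> b \in hcomp F x -> a != b -> F a b.

End Graphs.

(* Main.v *)
Require Import Defs.
From mathcomp Require Import all_boot.
From Stdlib Require Import Classical.
Set Implicit Arguments. Unset Strict Implicit. Unset Printing Implicit Defensive.

Section Aux.
Variables (T : finType) (F : rel T).
Hypothesis symF : symmetric F.

Lemma csymF : connect_sym F.
Proof. exact: sym_connect_sym. Qed.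

Lemma hcomp_eq x y : connect F x y -> hcomp F x = hcomp F y.
Proof.
move=> cxy; apply/setP=> z; rewrite !inE.
apply/idP/idP => h.
- by apply: connect_trans h; rewrite csymF.
- exact: connect_trans cxy h.
Qed.

Lemma tri_hdeg (V : {set T}) v : irreflexive F ->
  triangle_component F v -> hdeg V F v <= 2.
Proof.
move=> irrF [c3 _].
have sub : [set y in V | F v y] \subset hcomp F v :\ v.
  apply/subsetP=> y; rewrite !inE => /andP[_ Fvy].
  rewrite connect1 // andbT; apply/eqP=> eyv; subst y.
  by rewrite irrF in Fvy.
rewrite /hdeg; apply: leq_trans (subset_leq_card sub) _.
have vin : v \in hcomp F v by rewrite inE connect0.
by move: c3; rewrite (cardsD1 v) vin add1n => -[->].
Qed.
End Aux.

Theorem lemmaA16 (T : finType) (e : rel T) (V : {set T}) (F : rel T) :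
  simple_graph e -> connected_graph e -> regular e 4 ->
  proper_subgraph e V F -> ~~ (3 %| #|V|) ->
  exists2 v, v \in V & hdeg V F v <= 3 /\ ~ triangle_component F v.
Proof.
move=> [syme irre] conn reg [[symF subF] prop] ndiv.
apply: NNPP => Hn.
have H : forall v, v \in V -> hdeg V F v <= 3 -> triangle_component F v.
  move=> v vV hv; apply: NNPP => nt; apply: Hn; by exists v.
have irrF : irreflexive F.
  by move=> x; apply/negP => /subF /andP[]; rewrite irre.
set W := [set v in V | 3 < hdeg V F v].
have C1 : forall v y, v \in W -> e v y -> F v y.
  move=> v y; rewrite inE => /andP[vV hv] evy.
  have sub : [set y in V | F v y] \subset [set y | e v y].
    by apply/subsetP=> z; rewrite !inE => /andP[_ /subF/andP[->]].
  have : [set y in V | F v y] == [set y | e v y].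
    rewrite eqEcard sub /=; move: (reg v); rewrite /deg => ->; exact: hv.
  move/eqP/setP/(_ y); rewrite !inE evy => /andP[]//.
have C2 : forall v y, v \in W -> F v y -> y \in W.
  move=> v y vW Fvy.
  move: (subF _ _ Fvy) => /and3P[_ _ yV].
  rewrite inE yV /=; rewrite ltnNge; apply/negP => hy.
  have ty := H y yV hy.
  have tv : triangle_component F v.
    have cvy : connect F y v by rewrite csymF // connect1.
    by rewrite /triangle_component (hcomp_eq symF cvy) in ty.
  move: vW; rewrite inE => /andP[_]; rewrite ltnNge.
  by rewrite (leq_trans (tri_hdeg V irrF tv)).
have clW : closed e W.
  apply: intro_closed; first exact: sym_connect_sym.
  by move=> x y exy xW; apply: C2 xW (C1 _ _ xW exy).
have W0 : W = set0.
  apply/eqP; apply/negPn/negP => /set0Pn [w wW].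
  have allW : forall x, x \in W by move=> x; rewrite -(closed_connect clW (conn w x)).
  case: prop => [VT | [x [y /andP[exy nF]]]].
  - move/negP: VT; apply; apply/eqP/setP => z; rewrite inE.
    by move: (allW z); rewrite inE => /andP[].
  - by rewrite (C1 _ _ (allW x) exy) in nF.
have allT : forall v, v \in V -> triangle_component F v.
  move=> v vV; apply: (H v vV); rewrite leqNgt; apply/negP => h.
  have : v \in W by rewrite inE vV h.
  by rewrite W0 inE.
have eqiR : {in V & &, equivalence_rel (connect F)}.
  move=> x y z _ _ _; split; first exact: connect0.
  move=> cxy; apply/idP/idP => h.
  - by apply: connect_trans h; rewrite csymF.
  - exact: connect_trans cxy h.
have part := equivalence_partitionP eqiR.
move/negP: ndiv; apply.
rewrite (card_partition part); apply: dvdn_sum => A /imsetP [x xV ->].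
have -> : [set y in V | connect F x y] = hcomp F x.
  apply/setP=> y; rewrite !inE; apply: andb_idl => cxy.
  have clV : closed F V.
    by move=> a b /subF /and3P[_ -> ->].
  by rewrite -(closed_connect clV cxy).
by case: (allT x xV) => -> _.
Qed.
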